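(* Let $R$ be a unital ring, $E$ a directed graph, $X\subseteq\mathrm{Reg}(E)$, $S=M(\mathbb{Z},I)\cup\{0\}$, and $w$ a canonical weight mapping on $E$. Extend $w$ to the graph $E(X)$ by $w(v')=w(v)$ for $v\in Y$ and $w(\alpha')=w(\alpha)$ for edges $\alpha$ with $\mathrm{r}(\alpha)\in Y$. Then $C_R^X(E)$ (canonically $S$-graded via $w$) and $L_R(E(X))$ (canonically $S$-graded via the extended $w$) are graded isomorphic as $S$-graded rings, i.e. there is a ring isomorphism $\phi:C_R^X(E)\to L_R(E(X))$ with $\phi((C_R^X(E))_s)=(L_R(E(X)))_s$ for every $s\in S$.
   Context: Directed graph $E=(E^0,E^1,\mathrm{r},\mathrm{s})$; paths $E^*$ (vertices as length-$0$ paths); $\mathrm{Reg}(E)$ = vertices $v$ with $\mathrm{s}^{-1}(v)$ nonempty finite. For $X\subseteq\mathrm{Reg}(E)$, $C_R^X(E)$ is the $R$-algebra generated by $E^0$, $E^1$, $\{\alpha^*\}$ ($R$ commuting with generators) subject to $vv'=\delta_{v,v'}v$; $\mathrm{s}(\alpha)\alpha=\alpha\mathrm{r}(\alpha)=\alpha$, $\mathrm{r}(\alpha)\alpha^*=\alpha^*\mathrm{s}(\alpha)=\alpha^*$; $\alpha^*\alpha'=\delta_{\alpha,\alpha'}\mathrm{r}(\alpha)$; $\sum_{\mathrm{s}(\alpha)=v}\alpha\alpha^*=v$ for $v\in X$; $L_R(F)=C_R^{\mathrm{Reg}(F)}(F)$ for any graph $F$. The graph $E(X)$: let $Y=\mathrm{Reg}(E)\setminus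 X$ and $Y'=\{v':v\in Y\}$ a set of new vertices; $E(X)^0=E^0\sqcup Y'$, $E(X)^1=E^1\sqcup\{\alpha':\alpha\in E^1,\mathrm{r}(\alpha)\in Y\}$ where $\alpha'$ is a new edge with $\mathrm{s}(\alpha')=\mathrm{s}(\alpha)$, $\mathrm{r}(\alpha')=\mathrm{r}(\alpha)'$. $M(\mathbb{Z},I)=I\times\mathbb{Z}\times I$, $(i,a,j)(k,b,l)=(i,a+b,l)$ if $j=k$, else undefined; $S=M(\mathbb{Z},I)\cup\{0\}$, undefined products $0$, $0$ absorbing; $(i,a,j)^{-1}=(j,-a,i)$. Canonical weight mapping on a graph: vertices get weights $(i,0,i)$, edges $(i,1,j)$, $w(\alpha^* )=w(\alpha)^{-1}$, $w(\mathrm{s}(\alpha))w(\alpha)=w(\alpha)=w(\alpha)w(\mathrm{r}(\alpha))$; for each nonzero idempotent $f$, edges with source of weight $f$ share a weight and edges with range of weight $f$ share a weight; extended multiplicatively with $w(\mu\eta^* )=w(\mu)w(\eta)^{-1}$. Canonical grading: the $s$-component is the $R$-span of $\mu\eta^*$, $\mathrm{r}(\mu)=\mathrm{r}(\eta)$, $w(\mu\eta^* )=s$; the $0$-component is $0$. *)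

(* Defs.v *)
From HB Require Import structures.
From mathcomp Require Import all_boot all_order all_algebra.
From Stdlib Require List.
From Stdlib Require Import ClassicalEpsilon.
Set Implicit Arguments. Unset Strict Implicit. Unset Printing Implicit Defensive.
Import GRing.Theory.
Local Open Scope ring_scope.

Record graph := Graph { gV : Type; gE : Type; src : gE -> gV; rng : gE -> gV }.

Definition Reg (E : graph) (v : gV E) : Prop :=
  (exists e : gE E, src e = v) /\
  (exists l : seq (gE E), forall e, src e = v -> List.In e l).

Section EX.
Variables (E : graph) (X : gV E -> Prop).
Definition Yset (v : gV E) : Prop := @Reg E v /\ ~ X v.
Definition EX_V := (gV E + {v : gV E | Yset v})%type.
Definition EX_E := (gE E + {e : gE E | Yset (rng e)})%type.
Definition EX_src (e : EX_E) : EX_V :=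
  match e with inl e => inl (src e) | inr e' => inl (src (proj1_sig e')) end.
Definition EX_rng (e : EX_E) : EX_V :=
  match e with
  | inl e => inl (rng e)
  | inr e' => inr (exist _ (rng (proj1_sig e')) (proj2_sig e'))
  end.
Definition EXgraph : graph := Graph EX_src EX_rng.
End EX.

(* None is 0, Some (i,a,j) is (i,a,j). *)
Definition Ssg (I : Type) := option (I * int * I)%type.

Definition smul (I : Type) (x y : Ssg I) : Ssg I :=
  match x, y with
  | Some (i, a, j), Some (k, b, l) =>
      if excluded_middle_informative (j = k) then Some (i, a + b, l) else None
  | _, _ => None
  end.

Definition sinv (I : Type) (x : Ssg I) : Ssg I :=
  match x with Some (i, a, j) => Some (j, - a, i) | None => None end.

Record canonical_weight (E : graph) (I : Type)
    (wv : gV E -> Ssg I) (we : gE E -> Ssg I) : Prop := {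
  cw_vert : forall v, exists i, wv v = Some (i, 0%R, i);
  cw_edge : forall e, exists i j, we e = Some (i, 1%R, j);
  cw_src : forall e, smul (wv (src e)) (we e) = we e;
  cw_rng : forall e, smul (we e) (wv (rng e)) = we e;
  cw_share_src : forall f : Ssg I, f <> None -> smul f f = f ->
      forall e e', wv (src e) = f -> wv (src e') = f -> we e = we e';
  cw_share_rng : forall f : Ssg I, f <> None -> smul f f = f ->
      forall e e', wv (rng e) = f -> wv (rng e') = f -> we e = we e'
}.

Definition EX_wv (E : graph) (X : gV E -> Prop) (I : Type) (wv : gV E -> Ssg I)
  (v : gV (EXgraph X)) : Ssg I :=
  match v with inl v => wv v | inr v' => wv (proj1_sig v') end.
Definition EX_we (E : graph) (X : gV E -> Prop) (I : Type) (we : gE E -> Ssg I)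
  (e : gE (EXgraph X)) : Ssg I :=
  match e with inl e => we e | inr e' => we (proj1_sig e') end.

(* A path is a pair (v, l): v is the starting vertex, l the list of edges.
   Length-0 paths are vertices. *)
Fixpoint path_ok (E : graph) (v : gV E) (l : seq (gE E)) : Prop :=
  match l with
  | [::] => True
  | e :: l' => src e = v /\ path_ok (rng e) l'
  end.

Fixpoint path_end (E : graph) (v : gV E) (l : seq (gE E)) : gV E :=
  match l with
  | [::] => v
  | e :: l' => path_end (rng e) l'
  end.

Definition path_weight (E : graph) (I : Type) (wv : gV E -> Ssg I)
  (we : gE E -> Ssg I) (v : gV E) (l : seq (gE E)) : Ssg I :=
  match l with
  | [::] => wv v
  | e :: l' => foldl (fun acc e => smul acc (we e)) (we e) l'
  end.

Section Alg.
Variables (R : pzRingType) (E : graph) (A : pzRingType).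
Variables (iA : R -> A) (pv : gV E -> A) (pe ps : gE E -> A).

Definition path_elt (v : gV E) (l : seq (gE E)) : A :=
  if l is [::] then pv v else \prod_(e <- l) pe e.
Definition path_star (v : gV E) (l : seq (gE E)) : A :=
  if l is [::] then pv v else \prod_(e <- rev l) ps e.

Record Cohn_rels (X : gV E -> Prop) : Prop := {
  cr_R_v : forall a v, iA a * pv v = pv v * iA a;
  cr_R_e : forall a e, iA a * pe e = pe e * iA a;
  cr_R_s : forall a e, iA a * ps e = ps e * iA a;
  cr_vv : forall v, pv v * pv v = pv v;
  cr_vv' : forall v v', v <> v' -> pv v * pv v' = 0;
  cr_se : forall e, pv (src e) * pe e = pe e;
  cr_er : forall e, pe e * pv (rng e) = pe e;
  cr_rs : forall e, pv (rng e) * ps e = ps e;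
  cr_ss : forall e, ps e * pv (src e) = ps e;
  cr_ee : forall e, ps e * pe e = pv (rng e);
  cr_ee' : forall e e', e <> e' -> ps e * pe e' = 0;
  cr_CK : forall v, X v -> forall l : seq (gE E), List.NoDup l ->
      (forall e, List.In e l <-> src e = v) ->
      \sum_(e <- l) pe e * ps e = pv v
}.

(* canonical S-graded components: the s-component is the R-span of the
   mu eta^{*} with r(mu) = r(eta) and w(mu eta^{*}) = s; the 0-component is 0 *)
Definition component (I : Type) (wv : gV E -> Ssg I) (we : gE E -> Ssg I)
  (s : Ssg I) (x : A) : Prop :=
  match s with
  | None => x = 0
  | Some _ =>
    exists t : seq (R * (gV E * seq (gE E)) * (gV E * seq (gE E))),
      (forall k, List.In k t ->
         path_ok k.1.2.1 k.1.2.2 /\ path_ok k.2.1 k.2.2 /\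
         path_end k.1.2.1 k.1.2.2 = path_end k.2.1 k.2.2 /\
         smul (path_weight wv we k.1.2.1 k.1.2.2)
              (sinv (path_weight wv we k.2.1 k.2.2)) = s) /\
      x = \sum_(k <- t) iA k.1.1 * (path_elt k.1.2.1 k.1.2.2 * path_star k.2.1 k.2.2)
  end.
End Alg.

(* (A, iA, pv, pe, ps) is (a presentation of) C_R^X(E): the generators satisfy
   the relations, and A is universal among rings receiving R with R commuting
   with the images of generators satisfying the relations. *)
Definition is_Cohn_algebra (R : pzRingType) (E : graph) (X : gV E -> Prop)
  (A : pzRingType) (iA : {rmorphism R -> A}) (pv : gV E -> A) (pe ps : gE E -> A)
  : Prop :=
  Cohn_rels iA pv pe ps X /\
  (forall (B : pzRingType) (iB : {rmorphism R -> B})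
          (qv : gV E -> B) (qe qs : gE E -> B),
     Cohn_rels iB qv qe qs X ->
     exists phi : {rmorphism A -> B},
       (forall a, phi (iA a) = iB a) /\ (forall v, phi (pv v) = qv v) /\
       (forall e, phi (pe e) = qe e) /\ (forall e, phi (ps e) = qs e)) /\
  (forall (B : pzRingType) (phi psi : {rmorphism A -> B}),
     (forall a, phi (iA a) = psi (iA a)) -> (forall v, phi (pv v) = psi (pv v)) ->
     (forall e, phi (pe e) = psi (pe e)) -> (forall e, phi (ps e) = psi (ps e)) ->
     phi =1 psi).

Definition is_Leavitt_algebra (R : pzRingType) (F : graph)
  (A : pzRingType) (iA : {rmorphism R -> A}) (pv : gV F -> A) (pe ps : gE F -> A)
  : Prop := is_Cohn_algebra (@Reg F) iA pv pe ps.

(* Main.v *)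
Require Import Defs.
From HB Require Import structures.
From mathcomp Require Import all_boot all_order all_algebra.
From mathcomp Require Import zify.
From Stdlib Require Import ClassicalEpsilon ProofIrrelevance.
From Stdlib Require List Permutation.
Set Implicit Arguments. Unset Strict Implicit. Unset Printing Implicit Defensive.
Import GRing.Theory.
Local Open Scope ring_scope.

Section PathGen.
Variables (F : graph) (A : pzRingType) (pv : gV F -> A) (pe ps : gE F -> A).
Hypothesis vv : forall v, pv v * pv v = pv v.
Hypothesis se : forall e, pv (src e) * pe e = pe e.
Hypothesis er : forall e, pe e * pv (rng e) = pe e.
Hypothesis rs : forall e, pv (rng e) * ps e = ps e.
Hypothesis ss : forall e, ps e * pv (src e) = ps e.

Definition Mp (l : seq (gE F)) := \prod_(e <- l) pe e.
Definition Sp (l : seq (gE F)) := \prod_(e <- rev l) ps e.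

Lemma Mp_cons e l : Mp (e :: l) = pe e * Mp l.
Proof. by rewrite /Mp big_cons. Qed.
Lemma Sp_cons e l : Sp (e :: l) = Sp l * ps e.
Proof. by rewrite /Sp rev_cons -cats1 big_cat big_seq1. Qed.
Lemma Mp_rcons e l : Mp (rcons l e) = Mp l * pe e.
Proof. by rewrite /Mp -cats1 big_cat big_seq1. Qed.
Lemma Sp_rcons e l : Sp (rcons l e) = ps e * Sp l.
Proof. by rewrite /Sp rev_rcons big_cons. Qed.

Lemma Mp_end v l : path_ok v l -> Mp l * pv (path_end v l) = path_elt pv pe v l.
Proof.
elim: l v => [|e l IH] v /=; first by rewrite /Mp big_nil mul1r.
move=> [He Hl]; rewrite Mp_cons -mulrA IH //.
case: l Hl {IH} => [|f l] Hl /=; first by rewrite er /Mp big_seq1.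
by rewrite [in RHS]big_cons.
Qed.

Lemma Sp_end v l : path_ok v l -> pv (path_end v l) * Sp l = path_star pv ps v l.
Proof.
elim: l v => [|e l IH] v /=; first by rewrite /Sp big_nil mulr1.
move=> [He Hl]; rewrite Sp_cons mulrA IH //.
case: l Hl {IH} => [|f l] Hl /=; first by rewrite rs /Sp big_seq1.
by rewrite [rev (e :: _)]rev_cons -cats1 big_cat big_seq1.
Qed.

Lemma pv_Mp v l : path_ok v l -> pv v * (Mp l * pv (path_end v l)) = Mp l * pv (path_end v l).
Proof.
case: l => [|e l] /=; first by rewrite /Mp big_nil !mul1r vv.
by move=> [<- _]; rewrite Mp_cons !mulrA se.
Qed.

Lemma Sp_pv v l : path_ok v l -> (pv (path_end v l) * Sp l) * pv v = pv (path_end v l) * Sp l.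
Proof.
case: l => [|e l] /=; first by rewrite /Sp big_nil !mulr1 vv.
by move=> [<- _]; rewrite Sp_cons -!mulrA ss.
Qed.

Lemma mono_eq v1 l1 v2 l2 : path_ok v1 l1 -> path_ok v2 l2 ->
  path_end v1 l1 = path_end v2 l2 ->
  path_elt pv pe v1 l1 * path_star pv ps v2 l2 =
  Mp l1 * pv (path_end v1 l1) * Sp l2.
Proof.
move=> H1 H2 He; rewrite -Mp_end // -Sp_end // -He.
by rewrite -!mulrA (mulrA (pv _)) vv.
Qed.
End PathGen.

Lemma smul_some (I : Type) (i j k : I) (a b : int) :
  smul (Some (i, a, j)) (Some (j, b, k)) = Some (i, a + b, k).
Proof. by rewrite /smul; case: excluded_middle_informative. Qed.

Section WeightGen.
Variables (F : graph) (I : Type) (wvF : gV F -> Ssg I) (weF : gE F -> Ssg I) (idx : gV F -> I).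
Hypothesis hwv : forall v, wvF v = Some (idx v, 0, idx v).
Hypothesis hwe : forall e, weF e = Some (idx (src e), 1, idx (rng e)).

Lemma foldl_w i (n : int) y l : path_ok y l ->
  foldl (fun acc e => smul acc (weF e)) (Some (i, n, idx y)) l =
  Some (i, n + (size l)%:Z, idx (path_end y l)).
Proof.
elim: l n y => [|e l IH] n y /=; first by rewrite addr0.
move=> [He Hl]; rewrite hwe He /=; case: excluded_middle_informative => // ? /=; rewrite IH //.
congr (Some (_, _, _)); rewrite -addrA; congr (_ + _); lia.
Qed.

Lemma pw v l : path_ok v l ->
  path_weight wvF weF v l = Some (idx v, (size l)%:Z, idx (path_end v l)).
Proof.
case: l => [|e l] /=; first by rewrite hwv.
move=> [He Hl]; rewrite hwe He foldl_w //; congr (Some (_, _, _)); lia.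
Qed.

Lemma mono_w v1 l1 v2 l2 : path_ok v1 l1 -> path_ok v2 l2 ->
  path_end v1 l1 = path_end v2 l2 ->
  smul (path_weight wvF weF v1 l1) (sinv (path_weight wvF weF v2 l2)) =
  Some (idx v1, (size l1)%:Z - (size l2)%:Z, idx v2).
Proof. by move=> H1 H2 He; rewrite !pw // He /=; case: excluded_middle_informative. Qed.
End WeightGen.

Lemma In_cat (T : Type) (x : T) (s1 s2 : seq T) :
  List.In x (s1 ++ s2) <-> List.In x s1 \/ List.In x s2.
Proof. elim: s1 => [|y s1 IH] /=; [tauto | rewrite IH; tauto]. Qed.

Lemma In_map (T U : Type) (f : T -> U) (y : U) (s : seq T) :
  List.In y (map f s) <-> exists x, f x = y /\ List.In x s.
Proof.
elim: s => [|x s IH] /=; first by split => // -[? []].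
rewrite IH; split.
  by case=> [<-|[z [<- H]]]; [exists x; tauto | exists z; tauto].
by case=> z [<- [->|H]]; [left | right; exists z].
Qed.

Lemma In_pmap (T U : Type) (f : T -> option U) (y : U) (s : seq T) :
  List.In y (pmap f s) <-> exists x, f x = Some y /\ List.In x s.
Proof.
elim: s => [|x s IH] /=; first by split => // -[? []].
case Efx: (f x) => [z|] /=; rewrite IH; split.
- by case=> [<-|[w [H1 H2]]]; [exists x; tauto | exists w; tauto].
- case=> w [H1 [Ew|H2]]; last by right; exists w.
  by left; move: H1; rewrite -Ew Efx => -[].
- by case=> w [H1 H2]; exists w; tauto.
- case=> w [H1 [Ew|H2]]; last by exists w.
  by move: H1; rewrite -Ew Efx.
Qed.

Lemma NoDup_cat (T : Type) (s1 s2 : seq T) : List.NoDup s1 -> List.NoDup s2 ->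
  (forall x, List.In x s1 -> List.In x s2 -> False) -> List.NoDup (s1 ++ s2).
Proof.
elim: s1 => [|x s1 IH] //= H1 H2 Hd.
inversion H1; subst; constructor.
  by rewrite In_cat => -[//|]; apply: Hd; left.
by apply: IH => // y Hy; apply: Hd; right.
Qed.

Lemma NoDup_map (T U : Type) (f : T -> U) (s : seq T) : injective f ->
  List.NoDup s -> List.NoDup (map f s).
Proof.
move=> Hf; elim: s => [|x s IH] /= H; first by constructor.
inversion H; subst; constructor; last exact: IH.
by rewrite In_map => -[z [/Hf -> ?]].
Qed.

Lemma NoDup_pmap (T U : Type) (f : T -> option U) (s : seq T) :
  (forall x y z, f x = Some z -> f y = Some z -> x = y) ->
  List.NoDup s -> List.NoDup (pmap f s).
Proof.
move=> Hf; elim: s => [|x s IH] /= H; first by constructor.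
inversion H; subst; case Efx: (f x) => [z|] /=; last exact: IH.
constructor; last exact: IH.
by rewrite In_pmap => -[w [Hw Hin]]; have E := Hf _ _ _ Efx Hw; subst.
Qed.

Section SumGen.
Variable (A : pzRingType).

Lemma sum_perm (T : Type) (s1 s2 : seq T) (f : T -> A) :
  Permutation.Permutation s1 s2 -> \sum_(x <- s1) f x = \sum_(x <- s2) f x.
Proof.
elim=> [|x l l' _ IH|x y l|l l' l'' _ IH1 _ IH2]; rewrite ?big_cons ?IH //.
  by rewrite addrCA.
by rewrite IH1.
Qed.

Lemma sum_NoDup (T : Type) (s1 s2 : seq T) (f : T -> A) :
  List.NoDup s1 -> List.NoDup s2 -> (forall x, List.In x s1 <-> List.In x s2) ->
  \sum_(x <- s1) f x = \sum_(x <- s2) f x.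
Proof. by move=> H1 H2 H; apply: sum_perm; apply: Permutation.NoDup_Permutation. Qed.

Lemma sum_zero (T : Type) (s : seq T) (f : T -> A) :
  (forall x, List.In x s -> f x = 0) -> \sum_(x <- s) f x = 0.
Proof.
elim: s => [|x s IH] H; first by rewrite big_nil.
by rewrite big_cons H /=; [rewrite add0r IH // => y Hy; apply: H; right | left].
Qed.

Lemma sum_pick (T : Type) (s : seq T) (f : T -> A) (x : T) :
  List.NoDup s -> List.In x s -> (forall y, List.In y s -> y <> x -> f y = 0) ->
  \sum_(y <- s) f y = f x.
Proof.
elim: s => [|y s IH] //= Hn Hin H; inversion Hn; subst.
rewrite big_cons; case: Hin => [Exy|Hin].
  subst; rewrite sum_zero ?addr0 // => z Hz; apply: H; first by right.
  by move=> E; subst.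
rewrite H; first by rewrite add0r IH // => z Hz; apply: H; right.
  by left.
by move=> E; subst.
Qed.

Lemma sum_pmap (T U : Type) (g : T -> option U) (f : U -> A) (s : seq T) :
  \sum_(y <- pmap g s) f y = \sum_(x <- s) (if g x is Some y then f y else 0).
Proof.
elim: s => [|x s IH] /=; first by rewrite !big_nil.
by rewrite big_cons; case: (g x) => [y|] /=; rewrite ?big_cons IH // add0r.
Qed.
End SumGen.

Definition edec (T : Type) (x y : T) : {x = y} + {x <> y} :=
  excluded_middle_informative (x = y).

Lemma Reg_enum (E : graph) (v : gV E) : Reg v ->
  exists l : seq (gE E), List.NoDup l /\ forall e, List.In e l <-> src e = v.
Proof.
move=> [_ [l Hl]].
pose l1 := List.filter (fun e => if excluded_middle_informative (src e = v) then true else false) l.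
exists (List.nodup (@edec _) l1); split; first exact: List.NoDup_nodup.
move=> e; rewrite List.nodup_In List.filter_In.
case: excluded_middle_informative => H.
  by split => // _; split => //; apply: Hl.
by split => // -[].
Qed.

Section CompGen.
Variables (R : pzRingType) (F : graph) (A : pzRingType) (iA : {rmorphism R -> A})
  (pv : gV F -> A) (pe ps : gE F -> A) (I : Type) (wvF : gV F -> Ssg I) (weF : gE F -> Ssg I).
Local Notation comp := (component iA pv pe ps wvF weF).

Lemma comp0 s : comp s 0.
Proof. by case: s => [s|] //=; exists [::]; split => //; rewrite big_nil. Qed.

Lemma compD s x y : comp s x -> comp s y -> comp s (x + y).
Proof.
case: s => [s|] /=; last by move=> -> ->; rewrite addr0.
move=> [t1 [H1 ->]] [t2 [H2 ->]]; exists (t1 ++ t2); split; last by rewrite big_cat.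
by move=> k /In_cat [] ?; [apply: H1|apply: H2].
Qed.

Lemma compZ s a x : comp s x -> comp s (iA a * x).
Proof.
case: s => [s|] /=; last by move=> ->; rewrite mulr0.
move=> [t [H ->]]; exists (map (fun k => ((a * k.1.1, k.1.2), k.2)) t); split.
  by move=> k /In_map [k' [<- Hk']] /=; apply: H.
rewrite big_map mulr_sumr; apply: eq_bigr => k _ /=.
by rewrite rmorphM mulrA.
Qed.

Lemma compN s x : comp s x -> comp s (- x).
Proof. by move=> H; rewrite -mulN1r -(rmorphN1 iA); apply: compZ. Qed.

Lemma comp_sum s (T : Type) (r : seq T) (f : T -> A) :
  (forall k, List.In k r -> comp s (f k)) -> comp s (\sum_(k <- r) f k).
Proof.
elim: r => [|k r IH] H; first by rewrite big_nil; apply: comp0.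
rewrite big_cons; apply: compD; first by apply: H; left.
by apply: IH => k' Hk; apply: H; right.
Qed.

Lemma comp_mono s v1 l1 v2 l2 : path_ok v1 l1 -> path_ok v2 l2 ->
  path_end v1 l1 = path_end v2 l2 ->
  smul (path_weight wvF weF v1 l1) (sinv (path_weight wvF weF v2 l2)) = s ->
  s <> None -> comp s (path_elt pv pe v1 l1 * path_star pv ps v2 l2).
Proof.
case: s => [s|] // H1 H2 He Hw _ /=.
exists [:: ((1, (v1, l1)), (v2, l2))]; split.
  by move=> k [<-|[]] /=.
by rewrite big_seq1 /= rmorph1 mul1r.
Qed.
End CompGen.

Lemma eq_sum_In (A : pzRingType) (T : Type) (s : seq T) (f g : T -> A) :
  (forall x, List.In x s -> f x = g x) -> \sum_(x <- s) f x = \sum_(x <- s) g x.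
Proof.
elim: s => [|x s IH] H; first by rewrite !big_nil.
by rewrite !big_cons H /=; [rewrite IH // => y Hy; apply: H; right | left].
Qed.

Lemma path_ok_rcons (E : graph) (v : gV E) l b : path_ok v l -> src b = path_end v l ->
  path_ok v (rcons l b).
Proof. by elim: l v => [|a l IH] v /=; [move=> _ -> | move=> [Ha Hl] Hb; split => //; apply: IH]. Qed.
Lemma path_end_rcons (E : graph) (v : gV E) l b : path_end v (rcons l b) = rng b.
Proof. by elim: l v => [|a l IH] v //=. Qed.


Section EXcomb.
Variables (E : graph) (X : gV E -> Prop).
Local Notation EXG := (EXgraph X).
Local Notation emi := excluded_middle_informative.

Definition vb (w : gV EXG) : gV E := match w with inl v => v | inr v' => proj1_sig v' end.
Definition eb (e : gE EXG) : gE E := match e with inl a => a | inr a' => proj1_sig a' end.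

Lemma src_eb (e : gE EXG) : src e = inl (src (eb e)).
Proof. by case: e. Qed.
Lemma EX_src_eb (e : gE EXG) : EX_src e = inl (src (eb e)).
Proof. by case: e. Qed.
Lemma rng_eb (e : gE EXG) : vb (rng e) = rng (eb e).
Proof. by case: e. Qed.

Definition inrY (a : gE E) : option (gE EXG) :=
  match emi (Yset X (rng a)) with left h => Some (inr (exist _ a h)) | right _ => None end.
Definition elist (l : seq (gE E)) : seq (gE EXG) := map inl l ++ pmap inrY l.

Lemma elist_ok v l : List.NoDup l -> (forall e, List.In e l <-> src e = v) ->
  List.NoDup (elist l) /\ forall e : gE EXG, List.In e (elist l) <-> src e = inl v.
Proof.
move=> Hn Hl; split.
  apply: NoDup_cat.
  - by apply: NoDup_map => // x y [].
  - apply: NoDup_pmap => // x y z; rewrite /inrY.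
    by case: emi => // h1 [<-]; case: emi => // h2 [] ->.
  - move=> x /In_map [a [<- _]] /In_pmap [b [Hb _]]; move: Hb; rewrite /inrY.
    by case: emi.
move=> e; rewrite In_cat In_map In_pmap; split.
  case=> [[a [<- /Hl <-]] //|[a [Ha /Hl Hs]]]; move: Ha; rewrite /inrY.
  by case: emi => // h [<-] /=; rewrite Hs.
case: e => [a|[a h]] /= [Hs].
  by left; exists a; split => //; apply/Hl.
right; exists a; split; last by apply/Hl.
rewrite /inrY; case: emi => // h'; by rewrite (proof_irrelevance _ h h').
Qed.

Lemma sum_elist (A : pzRingType) (f : gE EXG -> A) l :
  \sum_(e <- elist l) f e = \sum_(a <- l)
     (f (inl a) + match emi (Yset X (rng a)) with left h => f (inr (exist _ a h)) | right _ => 0 end).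
Proof.
rewrite big_cat big_map sum_pmap big_split /=; congr (_ + _).
by apply: eq_bigr => a _; rewrite /inrY; case: emi.
Qed.

Lemma RegEX v : Reg v -> @Reg EXG (inl v).
Proof.
move=> Hv; have [[e He] _] := Hv; have [l [Hn Hl]] := Reg_enum Hv.
have [_ H] := elist_ok Hn Hl.
split; first by exists (inl e); rewrite /= He.
by exists (elist l) => e' He'; apply/H.
Qed.

Lemma RegEX_inv (w : gV EXG) : @Reg EXG w -> exists v, w = inl v /\ Reg v.
Proof.
move=> [[e He] [l Hl]]; move: He Hl; rewrite src_eb => <- Hl.
exists (src (eb e)); split => //; split; first by exists (eb e).
exists (map eb l) => a Ha; apply/In_map; exists (inl a); split => //.
by apply: Hl; rewrite /= Ha.
Qed.

Lemma Y_Reg v : Yset X v -> Reg v. Proof. by case. Qed.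

Lemma map_inl_path v l : path_ok v l ->
  @path_ok EXG (inl v) (map inl l) /\ @path_end EXG (inl v) (map inl l) = inl (path_end v l).
Proof.
elim: l v => [|a l IH] v //= [Ha Hl]; have [H1 H2] := IH _ Hl.
by rewrite Ha.
Qed.

Lemma proj_path (w : gV EXG) (k : seq (gE EXG)) : path_ok w k ->
  path_ok (vb w) (map eb k) /\ path_end (vb w) (map eb k) = vb (path_end w k).
Proof.
elim: k w => [|e k IH] w //= [He Hk]; have [H1 H2] := IH _ Hk.
have E1 : vb (EX_rng e) = rng (eb e) by case: e {He Hk H1 H2}.
have E2 : vb (EX_src e) = src (eb e) by case: e {He Hk H1 H2 E1}.
by rewrite -He E2 -E1.
Qed.

Definition pvert (v : gV E) : gV EXG :=
  match emi (Yset X v) with left h => inr (exist _ v h) | right _ => inl v end.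
Definition pstart (v : gV E) (l : seq (gE E)) : gV EXG := if l is [::] then pvert v else inl v.

Fixpoint pr (l : seq (gE E)) : seq (gE EXG) :=
  match l with
  | [::] => [::]
  | a :: l' => if l' is [::] then
                 match emi (Yset X (rng a)) with
                 | left h => [:: inr (exist _ a h)] | right _ => [:: inl a] end
               else inl a :: pr l'
  end.

Lemma vb_pvert v : vb (pvert v) = v.
Proof. by rewrite /pvert; case: emi. Qed.
Lemma vb_pstart v l : vb (pstart v l) = v.
Proof. by case: l => [|? ?] //=; rewrite vb_pvert. Qed.
Lemma size_pr l : size (pr l) = size l.
Proof.
elim: l => [|a l IH] //=; case: l IH => [|b l] IH /=; last by rewrite IH.
by case: emi.
Qed.

Lemma pvert_Y v (h : Yset X v) : pvert v = inr (exist _ v h).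
Proof. rewrite /pvert; case: emi => // h'; by rewrite (proof_irrelevance _ h h'). Qed.

Lemma pr_path v l : path_ok v l -> Yset X (path_end v l) ->
  @path_ok EXG (pstart v l) (pr l) /\ @path_end EXG (pstart v l) (pr l) = pvert (path_end v l).
Proof.
elim: l v => [|a l IH] v //= [Ha Hl] HY.
case: l IH Hl HY => [|b l] IH Hl HY /=.
  rewrite /pvert; case: emi => // h /=; by rewrite Ha.
have [H1 H2] := IH _ Hl HY; by rewrite Ha.
Qed.
End EXcomb.

Section Lside.
Variables (R : pzRingType) (E : graph) (X : gV E -> Prop).
Local Notation EXG := (EXgraph X).
Local Notation emi := excluded_middle_informative.
Variables (L : pzRingType) (iL : {rmorphism R -> L})
  (lv : gV EXG -> L) (le ls : gE EXG -> L).
Hypothesis LRv : forall a v, iL a * lv v = lv v * iL a.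
Hypothesis LRe : forall a e, iL a * le e = le e * iL a.
Hypothesis LRs : forall a e, iL a * ls e = ls e * iL a.
Hypothesis Lvv : forall v, lv v * lv v = lv v.
Hypothesis Lvv' : forall v v', v <> v' -> lv v * lv v' = 0.
Hypothesis Lse : forall e, lv (src e) * le e = le e.
Hypothesis Ler : forall e, le e * lv (rng e) = le e.
Hypothesis Lrs : forall e, lv (rng e) * ls e = ls e.
Hypothesis Lss : forall e, ls e * lv (src e) = ls e.
Hypothesis Lee : forall e, ls e * le e = lv (rng e).
Hypothesis Lee' : forall e e', e <> e' -> ls e * le e' = 0.
Hypothesis LCK : forall v, @Reg EXG v -> forall l : seq (gE EXG), List.NoDup l ->
      (forall e, List.In e l <-> src e = v) ->
      \sum_(e <- l) le e * ls e = lv v.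

Definition QV (v : gV E) : L :=
  match emi (Yset X v) with left h => lv (inr (exist _ v h)) | right _ => 0 end.
Definition QE (a : gE E) : L :=
  match emi (Yset X (rng a)) with left h => le (inr (exist _ a h)) | right _ => 0 end.
Definition QS (a : gE E) : L :=
  match emi (Yset X (rng a)) with left h => ls (inr (exist _ a h)) | right _ => 0 end.
Definition phiv v := lv (inl v) + QV v.
Definition phie a := le (inl a) + QE a.
Definition phis a := ls (inl a) + QS a.

Lemma QV_Y v (h : Yset X v) : QV v = lv (inr (exist _ v h)).
Proof. by rewrite /QV; case: emi => // h'; rewrite (proof_irrelevance _ h h'). Qed.
Lemma QV_nY v : ~ Yset X v -> QV v = 0.
Proof. by rewrite /QV; case: emi. Qed.
Lemma QE_Y a (h : Yset X (rng a)) : QE a = le (inr (exist _ a h)).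
Proof. by rewrite /QE; case: emi => // h'; rewrite (proof_irrelevance _ h h'). Qed.
Lemma QE_nY a : ~ Yset X (rng a) -> QE a = 0.
Proof. by rewrite /QE; case: emi. Qed.
Lemma QS_Y a (h : Yset X (rng a)) : QS a = ls (inr (exist _ a h)).
Proof. by rewrite /QS; case: emi => // h'; rewrite (proof_irrelevance _ h h'). Qed.
Lemma QS_nY a : ~ Yset X (rng a) -> QS a = 0.
Proof. by rewrite /QS; case: emi. Qed.

Lemma lvQV w v : lv (inl w) * QV v = 0.
Proof. by rewrite /QV; case: emi => h; rewrite ?mulr0 // Lvv'. Qed.
Lemma QVlv w v : QV v * lv (inl w) = 0.
Proof. by rewrite /QV; case: emi => h; rewrite ?mul0r // Lvv'. Qed.
Lemma QVQV v : QV v * QV v = QV v.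
Proof. by rewrite /QV; case: emi => h; rewrite ?mul0r // Lvv. Qed.
Lemma QVQV' v w : v <> w -> QV v * QV w = 0.
Proof.
move=> Hvw; rewrite /QV; case: emi => h; rewrite ?mul0r //; case: emi => h'; rewrite ?mulr0 //.
by apply: Lvv' => -[] E1.
Qed.

Lemma lvQE a : lv (inl (src a)) * QE a = QE a.
Proof. by rewrite /QE; case: emi => h; [exact: (Lse (inr (exist _ a h))) | rewrite mulr0]. Qed.
Lemma QEQV a : QE a * QV (rng a) = QE a.
Proof. by rewrite /QE /QV; case: emi => h; [exact: (Ler (inr (exist _ a h))) | rewrite mulr0]. Qed.
Lemma QVQS a : QV (rng a) * QS a = QS a.
Proof. by rewrite /QS /QV; case: emi => h; [exact: (Lrs (inr (exist _ a h))) | rewrite mulr0]. Qed.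
Lemma QSlv a : QS a * lv (inl (src a)) = QS a.
Proof. by rewrite /QS; case: emi => h; [exact: (Lss (inr (exist _ a h))) | rewrite mul0r]. Qed.
Lemma QSQE a : QS a * QE a = QV (rng a).
Proof. by rewrite /QS /QE /QV; case: emi => h; [exact: (Lee (inr (exist _ a h))) | rewrite mulr0]. Qed.
Lemma QSQE' a b : a <> b -> QS a * QE b = 0.
Proof.
move=> Hab; rewrite /QS /QE; case: emi => h; rewrite ?mul0r //; case: emi => h'; rewrite ?mulr0 //.
by apply: Lee' => -[] E1.
Qed.
Lemma lsQE a b : ls (inl a) * QE b = 0.
Proof. by rewrite /QE; case: emi => h; rewrite ?mulr0 // Lee'. Qed.
Lemma QSle a b : QS a * le (inl b) = 0.
Proof. by rewrite /QS; case: emi => h; rewrite ?mul0r // Lee'. Qed.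
Lemma QElv a w : QE a * lv (inl w) = 0.
Proof. by rewrite -QEQV -mulrA QVlv mulr0. Qed.
Lemma lvQS a w : lv (inl w) * QS a = 0.
Proof. by rewrite -QVQS mulrA lvQV mul0r. Qed.
Lemma leQV a w : le (inl a) * QV w = 0.
Proof. by rewrite -(Ler (inl a)) -mulrA lvQV mulr0. Qed.
Lemma QVls a w : QV w * ls (inl a) = 0.
Proof. by rewrite -(Lrs (inl a)) mulrA QVlv mul0r. Qed.
Lemma QVle a w : QV w * le (inl a) = 0.
Proof. by rewrite -(Lse (inl a)) mulrA QVlv mul0r. Qed.
Lemma QVQE a w : QV w * QE a = 0.
Proof. by rewrite -lvQE mulrA QVlv mul0r. Qed.
Lemma lsQV a w : ls (inl a) * QV w = 0.
Proof. by rewrite -(Lss (inl a)) -mulrA lvQV mulr0. Qed.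
Lemma QSQV a w : QS a * QV w = 0.
Proof. by rewrite -QSlv -mulrA lvQV mulr0. Qed.
Lemma leQS a b : le (inl a) * QS b = 0.
Proof. by rewrite -(Ler (inl a)) -mulrA lvQS mulr0. Qed.
Lemma QEls a b : QE a * ls (inl b) = 0.
Proof. by rewrite -QEQV -mulrA QVls mulr0. Qed.

Lemma phi_vv v : phiv v * phiv v = phiv v.
Proof. by rewrite /phiv mulrDl !mulrDr Lvv lvQV QVlv QVQV add0r addr0. Qed.
Lemma phi_vv' v w : v <> w -> phiv v * phiv w = 0.
Proof.
move=> H; rewrite /phiv mulrDl !mulrDr lvQV QVlv QVQV' // Lvv'; last by case.
by rewrite !addr0.
Qed.
Lemma phi_se a : phiv (src a) * phie a = phie a.
Proof. by rewrite /phiv /phie mulrDl !mulrDr (Lse (inl a)) lvQE QVle QVQE !addr0. Qed.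
Lemma phi_er a : phie a * phiv (rng a) = phie a.
Proof. by rewrite /phiv /phie mulrDl !mulrDr (Ler (inl a)) leQV QElv QEQV addr0 add0r. Qed.
Lemma phi_rs a : phiv (rng a) * phis a = phis a.
Proof. by rewrite /phiv /phis mulrDl !mulrDr (Lrs (inl a)) lvQS QVls QVQS addr0 add0r. Qed.
Lemma phi_ss a : phis a * phiv (src a) = phis a.
Proof. by rewrite /phiv /phis mulrDl !mulrDr (Lss (inl a)) lsQV QSlv QSQV !addr0. Qed.
Lemma phi_ee a : phis a * phie a = phiv (rng a).
Proof. by rewrite /phiv /phis /phie mulrDl !mulrDr (Lee (inl a)) lsQE QSle QSQE addr0 add0r. Qed.
Lemma phi_ee' a b : a <> b -> phis a * phie b = 0.
Proof.
move=> H; rewrite /phis /phie mulrDl !mulrDr lsQE QSle QSQE' // Lee'; last by case.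
by rewrite !addr0.
Qed.

Lemma phi_sum v l : Reg v -> List.NoDup l -> (forall e, List.In e l <-> src e = v) ->
  \sum_(a <- l) phie a * phis a = lv (inl v).
Proof.
move=> Hv Hn Hl; have [Hn' Hl'] := elist_ok X Hn Hl.
rewrite -(LCK (RegEX X Hv) Hn' Hl') sum_elist; apply: eq_bigr => a _.
rewrite /phie /phis mulrDl !mulrDr leQS QEls addr0 add0r; congr (_ + _).
by rewrite /QE /QS; case: emi => h; rewrite ?mulr0.
Qed.

Lemma phi_CK v : Reg v -> X v -> forall l : seq (gE E), List.NoDup l ->
  (forall e, List.In e l <-> src e = v) -> \sum_(a <- l) phie a * phis a = phiv v.
Proof.
move=> Hv Hx l Hn Hl; rewrite /phiv /QV; case: emi => [[_ /(_ Hx) //]|_].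
by rewrite addr0; apply: phi_sum.
Qed.


Lemma lv_pr b l : lv (inl (src b)) * Mp le (pr X (b :: l)) = Mp le (pr X (b :: l)).
Proof.
case: l => [|c l] /=.
  case: emi => h; rewrite /Mp big_seq1; [exact: (Lse (inr (exist _ b h))) | exact: (Lse (inl b))].
by rewrite Mp_cons mulrA (Lse (inl b)).
Qed.

Lemma pr_ls b l : Sp ls (pr X (b :: l)) * lv (inl (src b)) = Sp ls (pr X (b :: l)).
Proof.
case: l => [|c l] /=.
  case: emi => h; rewrite /Sp /= big_seq1; [exact: (Lss (inr (exist _ b h))) | exact: (Lss (inl b))].
by rewrite Sp_cons -mulrA (Lss (inl b)).
Qed.

Lemma absorb_inl v l : path_ok v l ->
  Mp phie l * lv (inl (path_end v l)) = Mp le (map inl l) * lv (inl (path_end v l)).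
Proof.
elim: l v => [|a l IH] v /=; first by rewrite /Mp /Sp /= !big_nil.
move=> [Ha Hl].
have [Hok Hend] := map_inl_path X Hl.
have H0 : QE a * (Mp le (map inl l) * lv (inl (path_end (rng a) l))) = 0.
  by rewrite -Hend -(pv_Mp Lvv Lse Hok) mulrA QElv mul0r.
by rewrite !Mp_cons -!mulrA IH // /phie mulrDl H0 addr0.
Qed.

Lemma absorb_inl_s v l : path_ok v l ->
  lv (inl (path_end v l)) * Sp phis l = lv (inl (path_end v l)) * Sp ls (map inl l).
Proof.
elim: l v => [|a l IH] v /=; first by rewrite /Mp /Sp /= !big_nil.
move=> [Ha Hl].
have [Hok Hend] := map_inl_path X Hl.
have H0 : (lv (inl (path_end (rng a) l)) * Sp ls (map inl l)) * QS a = 0.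
  by rewrite -Hend -(Sp_pv Lvv Lss Hok) -mulrA lvQS mulr0.
by rewrite !Sp_cons !mulrA IH // /phis mulrDr H0 addr0.
Qed.

Lemma absorb_inr v l : path_ok v l ->
  Mp phie l * QV (path_end v l) = Mp le (pr X l) * QV (path_end v l).
Proof.
elim: l v => [|a l IH] v; first by rewrite /Mp /Sp /= !big_nil.
case: l IH => [|b l] IH [Ha Hl].
  rewrite /= Mp_cons /Mp big_nil mulr1 /phie mulrDl leQV add0r QEQV.
  rewrite /QE /QV; case: emi => h; rewrite ?mulr0 // big_seq1.
  by have := Ler (inr (exist _ a h)) => /= ->.
have Hs : src b = rng a by case: Hl.
change (path_end v [:: a, b & l]) with (path_end (rng a) (b :: l)).
change (pr X [:: a, b & l]) with (inl a :: pr X (b :: l)).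
rewrite [Mp phie _]Mp_cons [Mp le _]Mp_cons -!mulrA IH // /phie mulrDl.
by rewrite -lv_pr Hs !mulrA QElv !mul0r addr0.
Qed.

Lemma absorb_inr_s v l : path_ok v l ->
  QV (path_end v l) * Sp phis l = QV (path_end v l) * Sp ls (pr X l).
Proof.
elim: l v => [|a l IH] v; first by rewrite /Mp /Sp /= !big_nil.
case: l IH => [|b l] IH [Ha Hl].
  rewrite /= Sp_cons /Sp big_nil mul1r /phis mulrDr QVls add0r QVQS.
  rewrite /QS /QV; case: emi => h; rewrite ?mul0r //= big_seq1.
  by have := Lrs (inr (exist _ a h)) => /= ->.
have Hs : src b = rng a by case: Hl.
change (path_end v [:: a, b & l]) with (path_end (rng a) (b :: l)).
change (pr X [:: a, b & l]) with (inl a :: pr X (b :: l)).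
rewrite [Sp phis _]Sp_cons [Sp ls _]Sp_cons !mulrA IH // /phis mulrDr.
by rewrite -pr_ls Hs -!mulrA lvQS !mulr0 addr0.
Qed.

Variables (I : Type) (wv : gV E -> Ssg I) (we : gE E -> Ssg I) (idx : gV E -> I).
Hypothesis hwv : forall v, wv v = Some (idx v, 0, idx v).
Hypothesis hwe : forall e, we e = Some (idx (src e), 1, idx (rng e)).

Lemma hwvX (w : gV EXG) : EX_wv wv w = Some (idx (vb w), 0, idx (vb w)).
Proof. by case: w => [v|[v h]] /=; rewrite hwv. Qed.
Lemma hweX (e : gE EXG) : EX_we we e = Some (idx (vb (src e)), 1, idx (vb (rng e))).
Proof. by case: e => [a|[a h]] /=; rewrite hwe. Qed.

Lemma phiA v1 l1 v2 l2 (s : Ssg I) : path_ok v1 l1 -> path_ok v2 l2 ->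
  path_end v1 l1 = path_end v2 l2 ->
  s = Some (idx v1, (size l1)%:Z - (size l2)%:Z, idx v2) ->
  component iL lv le ls (EX_wv wv) (EX_we we) s
    (Mp phie l1 * phiv (path_end v1 l1) * Sp phis l2).
Proof.
move=> H1 H2 He Hs; set u := path_end v1 l1.
rewrite /phiv mulrDr mulrDl; apply: compD.
  rewrite -{1}Lvv -!mulrA mulrA {1}/u absorb_inl // /u He absorb_inl_s // -He.
  have [Ok1 E1] := map_inl_path X H1; have [Ok2 E2] := map_inl_path X H2.
  rewrite mulrA -(mulrA (Mp le _)) Lvv -E1 -(mono_eq Lvv Ler Lrs Ok1 Ok2); last by rewrite E1 E2 He.
  apply: comp_mono => //; first by rewrite E1 E2 He.
    rewrite (mono_w hwvX hweX) //; last by rewrite E1 E2 He.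
    by rewrite Hs !size_map.
  by rewrite Hs.
case: (emi (Yset X u)) => h; last first.
  by rewrite /QV; case: emi => // _; rewrite mulr0 mul0r; apply: comp0.
rewrite -{1}QVQV -!mulrA mulrA {1}/u absorb_inr // /u He absorb_inr_s // -He.
have [Ok1 E1] := pr_path H1 h; have h2 : Yset X (path_end v2 l2) by rewrite -He.
have [Ok2 E2] := pr_path H2 h2.
have EQ : QV u = lv (pvert X u) by rewrite /QV /pvert; case: emi.
rewrite mulrA -(mulrA (Mp le _)) QVQV EQ -E1 -(mono_eq Lvv Ler Lrs Ok1 Ok2); last by rewrite E1 E2 He.
apply: comp_mono => //; first by rewrite E1 E2 He.
  rewrite (mono_w hwvX hweX) //; last by rewrite E1 E2 He.
  by rewrite Hs !size_pr !vb_pstart.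
by rewrite Hs.
Qed.

Variables (C : pzRingType) (iC : {rmorphism R -> C})
  (cv : gV E -> C) (ce cs : gE E -> C).
Hypothesis CRv : forall a v, iC a * cv v = cv v * iC a.
Hypothesis CRe : forall a e, iC a * ce e = ce e * iC a.
Hypothesis CRs : forall a e, iC a * cs e = cs e * iC a.
Hypothesis Cvv : forall v, cv v * cv v = cv v.
Hypothesis Cvv' : forall v v', v <> v' -> cv v * cv v' = 0.
Hypothesis Cse : forall e, cv (src e) * ce e = ce e.
Hypothesis Cer : forall e, ce e * cv (rng e) = ce e.
Hypothesis Crs : forall e, cv (rng e) * cs e = cs e.
Hypothesis Css : forall e, cs e * cv (src e) = cs e.
Hypothesis Cee : forall e, cs e * ce e = cv (rng e).
Hypothesis Cee' : forall e e', e <> e' -> cs e * ce e' = 0.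
Hypothesis CCK : forall v, X v -> forall l : seq (gE E), List.NoDup l ->
      (forall e, List.In e l <-> src e = v) ->
      \sum_(e <- l) ce e * cs e = cv v.

Definition enumv (v : gV E) : seq (gE E) :=
  match emi (exists l : seq (gE E), List.NoDup l /\ forall e, List.In e l <-> src e = v) with
  | left h => proj1_sig (constructive_indefinite_description _ h)
  | right _ => [::] end.

Lemma enumv_ok v : Reg v -> List.NoDup (enumv v) /\ forall e, List.In e (enumv v) <-> src e = v.
Proof.
move=> Hv; rewrite /enumv; case: emi => [h|hn]; last by case: hn; apply: Reg_enum.
exact: (proj2_sig (constructive_indefinite_description _ h)).
Qed.

Definition SumP v := \sum_(b <- enumv v) ce b * cs b.
Definition P v := if emi (Yset X v) then SumP v else cv v.
Definition N v := cv v - P v.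
Definition Pst (w : gV EXG) : C := match w with inl v => P v | inr v' => N (proj1_sig v') end.
Definition psie (e : gE EXG) := ce (eb e) * Pst (rng e).
Definition psis (e : gE EXG) := Pst (rng e) * cs (eb e).

Lemma orth x y v w : x = x * cv v -> y = cv w * y -> v <> w -> x * y = 0.
Proof. by move=> -> -> H; rewrite mulrA -(mulrA x) Cvv' // mulr0 mul0r. Qed.

Section RegV.
Variable v : gV E.
Hypothesis Hv : Reg v.
Lemma SumP_l : cv v * SumP v = SumP v.
Proof.
rewrite /SumP mulr_sumr; apply: eq_sum_In => b Hb.
by have [_ /(_ b) [H _]] := enumv_ok Hv; rewrite mulrA -(H Hb) Cse.
Qed.
Lemma SumP_r : SumP v * cv v = SumP v.
Proof.
rewrite /SumP mulr_suml; apply: eq_sum_In => b Hb.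
by have [_ /(_ b) [H _]] := enumv_ok Hv; rewrite -mulrA -(H Hb) Css.
Qed.
Lemma SumP_e a : src a = v -> SumP v * ce a = ce a.
Proof.
move=> Ha; have [Hn Hl] := enumv_ok Hv.
rewrite /SumP mulr_suml (sum_pick (x := a)) //; first by rewrite -mulrA Cee Cer.
  by apply/Hl.
by move=> y _ Hy; rewrite -mulrA Cee' // mulr0.
Qed.
Lemma cs_SumP a : src a = v -> cs a * SumP v = cs a.
Proof.
move=> Ha; have [Hn Hl] := enumv_ok Hv.
rewrite /SumP mulr_sumr (sum_pick (x := a)) //; first by rewrite mulrA Cee Crs.
  by apply/Hl.
by move=> y _ Hy; rewrite mulrA Cee' // ?mul0r // => E1; apply: Hy.
Qed.
Lemma SumP_idem : SumP v * SumP v = SumP v.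
Proof.
rewrite {2}/SumP mulr_sumr /SumP; apply: eq_sum_In => b Hb.
by have [_ /(_ b) [H _]] := enumv_ok Hv; rewrite mulrA SumP_e // H.
Qed.
End RegV.

Lemma P_Y v : Yset X v -> P v = SumP v. Proof. by rewrite /P; case: emi. Qed.
Lemma P_nY v : ~ Yset X v -> P v = cv v. Proof. by rewrite /P; case: emi. Qed.

Lemma cvP v : cv v * P v = P v.
Proof. by rewrite /P; case: emi => h; [apply: SumP_l; case: h | apply: Cvv]. Qed.
Lemma Pcv v : P v * cv v = P v.
Proof. by rewrite /P; case: emi => h; [apply: SumP_r; case: h | apply: Cvv]. Qed.
Lemma PP v : P v * P v = P v.
Proof. by rewrite /P; case: emi => h; [apply: SumP_idem; case: h | apply: Cvv]. Qed.
Lemma Pe a : P (src a) * ce a = ce a.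
Proof. by rewrite /P; case: emi => h; [apply: SumP_e => //; case: h | apply: Cse]. Qed.
Lemma sP a : cs a * P (src a) = cs a.
Proof. by rewrite /P; case: emi => h; [apply: cs_SumP => //; case: h | apply: Css]. Qed.
Lemma cvN v : cv v * N v = N v. Proof. by rewrite /N mulrBr Cvv cvP. Qed.
Lemma Ncv v : N v * cv v = N v. Proof. by rewrite /N mulrBl Cvv Pcv. Qed.
Lemma PN v : P v * N v = 0. Proof. by rewrite /N mulrBr Pcv PP subrr. Qed.
Lemma NP v : N v * P v = 0. Proof. by rewrite /N mulrBl cvP PP subrr. Qed.
Lemma NN v : N v * N v = N v. Proof. by rewrite {1}/N mulrBl cvN PN subr0. Qed.

Lemma Pst_idem w : Pst w * Pst w = Pst w. Proof. by case: w => [v|v] /=; [apply: PP | apply: NN]. Qed.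
Lemma cvPst w : cv (vb w) * Pst w = Pst w. Proof. by case: w => [v|v] /=; [apply: cvP | apply: cvN]. Qed.
Lemma Pstcv w : Pst w * cv (vb w) = Pst w. Proof. by case: w => [v|v] /=; [apply: Pcv | apply: Ncv]. Qed.

Lemma Pst_orth w w' : w <> w' -> Pst w * Pst w' = 0.
Proof.
move=> H; case: (emi (vb w = vb w')) => Hb; last first.
  by apply: (orth (v := vb w) (w := vb w')) => //; rewrite ?Pstcv ?cvPst.
case: w w' H Hb => [v|[v hv]] [v'|[v' hv']] /= H Hb; subst.
- by case: H.
- exact: PN.
- exact: NP.
- by case: H; rewrite (proof_irrelevance _ hv hv').
Qed.

Lemma psi_se e : Pst (src e) * psie e = psie e.
Proof. by rewrite src_eb /psie mulrA /= Pe. Qed.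
Lemma psi_er e : psie e * Pst (rng e) = psie e.
Proof. by rewrite /psie -mulrA Pst_idem. Qed.
Lemma psi_rs e : Pst (rng e) * psis e = psis e.
Proof. by rewrite /psis mulrA Pst_idem. Qed.
Lemma psi_ss e : psis e * Pst (src e) = psis e.
Proof. by rewrite src_eb /psis -mulrA /= sP. Qed.
Lemma psi_ee e : psis e * psie e = Pst (rng e).
Proof.
rewrite /psis /psie mulrA -(mulrA _ (cs _)) Cee -rng_eb Pstcv Pst_idem //.
Qed.

Lemma eb_rng (e e' : gE EXG) : eb e = eb e' -> e <> e' -> rng e <> rng e'.
Proof.
case: e e' => [a|[a h]] [a'|[a' h']] /= Hb H; subst => //.
by case: H; rewrite (proof_irrelevance _ h h').
Qed.

Lemma psi_ee' e e' : e <> e' -> psis e * psie e' = 0.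
Proof.
move=> H; rewrite /psis /psie; case: (emi (eb e = eb e')) => Hb; last first.
  by rewrite mulrA -(mulrA _ (cs _)) Cee' // mulr0 mul0r.
rewrite mulrA -(mulrA _ (cs _)) Hb Cee -rng_eb -mulrA cvPst Pst_orth //.
exact: eb_rng.
Qed.

Lemma psi_CK w : @Reg EXG w -> forall l : seq (gE EXG), List.NoDup l ->
  (forall e, List.In e l <-> src e = w) -> \sum_(e <- l) psie e * psis e = Pst w.
Proof.
move=> /RegEX_inv [v [-> Hv]] l Hn Hl; have [Hn0 Hl0] := enumv_ok Hv.
have [Hn1 Hl1] := elist_ok X Hn0 Hl0.
rewrite (sum_NoDup _ Hn Hn1); last by move=> e; rewrite Hl Hl1.
rewrite sum_elist.
have -> : \sum_(a <- enumv v)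
   (psie (inl a) * psis (inl a) + match emi (Yset X (rng a)) with
      | left h => psie (inr (exist _ a h)) * psis (inr (exist _ a h)) | right _ => 0 end)
   = SumP v.
  apply: eq_bigr => a _; rewrite /psie /psis /=.
  case: emi => h; last by rewrite P_nY // addr0 -mulrA (mulrA (cv _)) Cvv Crs.
  rewrite !mulrA -!(mulrA (ce a)) PP NN -mulrDr -mulrDl.
  by rewrite /N addrC subrK Crs.
rewrite /=; case: (emi (Yset X v)) => h; first by rewrite P_Y.
have Hx : X v by case: (classic (X v)) => // Hx; case: h.
by rewrite P_nY // /SumP (CCK Hx Hn0 Hl0).
Qed.

Lemma comm_P a v : GRing.comm (iC a) (P v).
Proof.
rewrite /P; case: emi => ?; last exact: CRv.
by apply: commr_sum => b _; apply: commrM.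
Qed.
Lemma comm_Pst a w : GRing.comm (iC a) (Pst w).
Proof. by case: w => [v|v] /=; [apply: comm_P | apply: commrB; [apply: CRv | apply: comm_P]]. Qed.
Lemma psi_Re a e : iC a * psie e = psie e * iC a.
Proof. by apply: commrM; [apply: CRe | apply: comm_Pst]. Qed.
Lemma psi_Rs a e : iC a * psis e = psis e * iC a.
Proof. by apply: commrM; [apply: comm_Pst | apply: CRs]. Qed.


Lemma PstM (w : gV EXG) k : path_ok w k ->
  Pst w * (Mp ce (map (@eb E X) k) * Pst (path_end w k)) = Mp ce (map (@eb E X) k) * Pst (path_end w k).
Proof.
case: k => [|f k] /=; first by rewrite /Mp big_nil !mul1r Pst_idem.
move=> [<- _]; rewrite EX_src_eb /= Mp_cons !mulrA Pe //.
Qed.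

Lemma SpP (w : gV EXG) k : path_ok w k ->
  Pst (path_end w k) * Sp cs (map (@eb E X) k) * Pst w = Pst (path_end w k) * Sp cs (map (@eb E X) k).
Proof.
case: k => [|f k] /=; first by rewrite /Sp big_nil !mulr1 Pst_idem.
move=> [<- _]; rewrite EX_src_eb /= Sp_cons -!mulrA sP //.
Qed.

Lemma absorbB (w : gV EXG) k : path_ok w k ->
  Mp psie k * Pst (path_end w k) = Mp ce (map (@eb E X) k) * Pst (path_end w k).
Proof.
elim: k w => [|e k IH] w /=; first by rewrite /Mp !big_nil.
move=> [He Hk]; rewrite !Mp_cons -!mulrA IH //; exact: (f_equal (fun x => ce (eb e) * x) (PstM Hk)).
Qed.

Lemma absorbB_s (w : gV EXG) k : path_ok w k ->
  Pst (path_end w k) * Sp psis k = Pst (path_end w k) * Sp cs (map (@eb E X) k).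
Proof.
elim: k w => [|e k IH] w /=; first by rewrite /Sp !big_nil.
move=> [He Hk]; rewrite !Sp_cons !mulrA IH //; congr (_ * _); exact: (SpP Hk).
Qed.


Lemma C_mono_cv v1 m1 v2 m2 (s : Ssg I) : path_ok v1 m1 -> path_ok v2 m2 ->
  path_end v1 m1 = path_end v2 m2 ->
  s = Some (idx v1, (size m1)%:Z - (size m2)%:Z, idx v2) ->
  component iC cv ce cs wv we s (Mp ce m1 * cv (path_end v1 m1) * Sp cs m2).
Proof.
move=> H1 H2 He Hs; rewrite -(mono_eq Cvv Cer Crs H1 H2 He).
apply: comp_mono => //; last by rewrite Hs.
by rewrite (mono_w hwv hwe).
Qed.

Lemma C_mono_Sum v1 m1 v2 m2 (s : Ssg I) : path_ok v1 m1 -> path_ok v2 m2 ->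
  path_end v1 m1 = path_end v2 m2 -> Reg (path_end v1 m1) ->
  s = Some (idx v1, (size m1)%:Z - (size m2)%:Z, idx v2) ->
  component iC cv ce cs wv we s (Mp ce m1 * SumP (path_end v1 m1) * Sp cs m2).
Proof.
move=> H1 H2 He Hr Hs; have [Hn Hl] := enumv_ok Hr.
rewrite /SumP mulr_sumr mulr_suml; apply: comp_sum => b Hb.
have Hsb : src b = path_end v1 m1 by apply/Hl.
have -> : Mp ce m1 * (ce b * cs b) * Sp cs m2 =
    Mp ce (rcons m1 b) * cv (path_end v1 (rcons m1 b)) * Sp cs (rcons m2 b).
  by rewrite path_end_rcons Mp_rcons Sp_rcons -[in RHS](mulrA (Mp ce m1)) Cer !mulrA.
apply: (C_mono_cv (v2 := v2)).
- exact: (path_ok_rcons H1).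
- by apply: (path_ok_rcons H2); rewrite -He.
- by rewrite !path_end_rcons.
- rewrite Hs !size_rcons; congr (Some (_, _, _)); lia.
Qed.

Lemma psiB (w1 : gV EXG) k1 w2 k2 (s : Ssg I) : path_ok w1 k1 -> path_ok w2 k2 ->
  path_end w1 k1 = path_end w2 k2 ->
  s = Some (idx (vb w1), (size k1)%:Z - (size k2)%:Z, idx (vb w2)) ->
  component iC cv ce cs wv we s (Mp psie k1 * Pst (path_end w1 k1) * Sp psis k2).
Proof.
move=> H1 H2 He Hs.
rewrite -{1}Pst_idem -!mulrA mulrA absorbB // He absorbB_s // -He.
rewrite mulrA -(mulrA (Mp ce _)) Pst_idem.
have [Ok1 E1] := proj_path H1; have [Ok2 E2] := proj_path H2.
have Ee : path_end (vb w1) (map (@eb E X) k1) = path_end (vb w2) (map (@eb E X) k2) by rewrite E1 E2 He.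
have Hs' : s = Some (idx (vb w1), (size (map (@eb E X) k1))%:Z - (size (map (@eb E X) k2))%:Z, idx (vb w2)).
  by rewrite !size_map.
case Ez: (path_end w1 k1) E1 => [x|[x hx]] /= E1.
  case: (emi (Yset X x)) => h.
    rewrite P_Y // -E1; apply: (C_mono_Sum (v2 := vb w2)); try done; rewrite E1; exact: (Y_Reg h).
  by rewrite P_nY // -E1; apply: (C_mono_cv (v2 := vb w2)).
rewrite /N P_Y // mulrBr mulrBl -E1; apply: compD; first exact: (C_mono_cv (v2 := vb w2)).
apply: compN; apply: (C_mono_Sum (v2 := vb w2)); try done; rewrite E1; exact: (Y_Reg hx).
Qed.


Hypothesis HX : forall v, X v -> Reg v.
Hypothesis HCu : forall (B : pzRingType) (iB : {rmorphism R -> B})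
          (qv : gV E -> B) (qe qs : gE E -> B),
     Cohn_rels iB qv qe qs X ->
     exists phi : {rmorphism C -> B},
       (forall a, phi (iC a) = iB a) /\ (forall v, phi (cv v) = qv v) /\
       (forall e, phi (ce e) = qe e) /\ (forall e, phi (cs e) = qs e).
Hypothesis HCq : forall (B : pzRingType) (phi psi : {rmorphism C -> B}),
     (forall a, phi (iC a) = psi (iC a)) -> (forall v, phi (cv v) = psi (cv v)) ->
     (forall e, phi (ce e) = psi (ce e)) -> (forall e, phi (cs e) = psi (cs e)) ->
     phi =1 psi.
Hypothesis HLu : forall (B : pzRingType) (iB : {rmorphism R -> B})
          (qv : gV EXG -> B) (qe qs : gE EXG -> B),
     Cohn_rels iB qv qe qs (@Reg EXG) ->
     exists phi : {rmorphism L -> B},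
       (forall a, phi (iL a) = iB a) /\ (forall v, phi (lv v) = qv v) /\
       (forall e, phi (le e) = qe e) /\ (forall e, phi (ls e) = qs e).
Hypothesis HLq : forall (B : pzRingType) (phi psi : {rmorphism L -> B}),
     (forall a, phi (iL a) = psi (iL a)) -> (forall v, phi (lv v) = psi (lv v)) ->
     (forall e, phi (le e) = psi (le e)) -> (forall e, phi (ls e) = psi (ls e)) ->
     phi =1 psi.

Lemma comm_QV a v : GRing.comm (iL a) (QV v).
Proof. by rewrite /QV; case: emi => h; [apply: LRv | apply: commr0]. Qed.
Lemma comm_QE a e : GRing.comm (iL a) (QE e).
Proof. by rewrite /QE; case: emi => h; [apply: LRe | apply: commr0]. Qed.
Lemma comm_QS a e : GRing.comm (iL a) (QS e).
Proof. by rewrite /QS; case: emi => h; [apply: LRs | apply: commr0]. Qed.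

Lemma phi_rels : Cohn_rels iL phiv phie phis X.
Proof.
constructor.
- by move=> a v; apply: commrD; [apply: LRv | apply: comm_QV].
- by move=> a e; apply: commrD; [apply: LRe | apply: comm_QE].
- by move=> a e; apply: commrD; [apply: LRs | apply: comm_QS].
- exact: phi_vv.
- exact: phi_vv'.
- exact: phi_se.
- exact: phi_er.
- exact: phi_rs.
- exact: phi_ss.
- exact: phi_ee.
- exact: phi_ee'.
- by move=> v Hx l Hn Hl; apply: phi_CK => //; apply: HX.
Qed.

Lemma psi_rels : Cohn_rels iC Pst psie psis (@Reg EXG).
Proof.
constructor.
- by move=> a v; apply: comm_Pst.
- exact: psi_Re.
- exact: psi_Rs.
- exact: Pst_idem.
- exact: Pst_orth.
- exact: psi_se.
- exact: psi_er.
- exact: psi_rs.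
- exact: psi_ss.
- exact: psi_ee.
- exact: psi_ee'.
- exact: psi_CK.
Qed.

Lemma main : exists phi : {rmorphism C -> L}, bijective phi /\
  forall (s : Ssg I) (y : L),
      component iL lv le ls (EX_wv wv) (EX_we we) s y <->
      exists x : C, component iC cv ce cs wv we s x /\ phi x = y.
Proof.
have [phi [phi_i [phi_v [phi_e phi_s]]]] := HCu phi_rels.
have [psi [psi_i [psi_v [psi_e psi_s]]]] := HLu psi_rels.
have phiSum v : Reg v -> phi (SumP v) = lv (inl v).
  move=> Hv; have [Hn Hl] := enumv_ok Hv.
  rewrite /SumP rmorph_sum -(phi_sum Hv Hn Hl); apply: eq_bigr => b _.
  by rewrite rmorphM phi_e phi_s.
have phiP v : phi (P v) = lv (inl v).
  case: (emi (Yset X v)) => h; first by rewrite P_Y // phiSum //; case: h.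
  by rewrite P_nY // phi_v /phiv QV_nY // addr0.
have phiN v (h : Yset X v) : phi (N v) = lv (inr (exist _ v h)).
  by rewrite /N rmorphB phiP phi_v /phiv QV_Y addrAC subrr add0r.
have psiphi : (psi \o phi : {rmorphism C -> C}) =1 (idfun : {rmorphism C -> C}).
  apply: HCq => /=.
  - by move=> a; rewrite phi_i psi_i.
  - move=> v; rewrite phi_v /phiv rmorphD psi_v /=.
    case: (emi (Yset X v)) => h; last by rewrite QV_nY // rmorph0 addr0 P_nY.
    by rewrite QV_Y psi_v /= /N addrC subrK.
  - move=> a; rewrite phi_e /phie rmorphD psi_e /psie /=.
    case: (emi (Yset X (rng a))) => h; last by rewrite QE_nY // rmorph0 addr0 P_nY // Cer.
    by rewrite QE_Y psi_e /psie /= -mulrDr /N addrC subrK Cer.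
  - move=> a; rewrite phi_s /phis rmorphD psi_s /psis /=.
    case: (emi (Yset X (rng a))) => h; last by rewrite QS_nY // rmorph0 addr0 P_nY // Crs.
    by rewrite QS_Y psi_s /psis /= -mulrDl /N addrC subrK Crs.
have phipsi : (phi \o psi : {rmorphism L -> L}) =1 (idfun : {rmorphism L -> L}).
  apply: HLq => /=.
  - by move=> a; rewrite psi_i phi_i.
  - by case=> [v|[v h]]; rewrite psi_v /= ?phiP ?phiN.
  - case=> [a|[a h]]; rewrite psi_e /psie /= rmorphM phi_e.
      by rewrite phiP /phie mulrDl (Ler (inl a)) QElv addr0.
    by rewrite phiN -QV_Y /phie mulrDl leQV add0r QEQV QE_Y.
  - case=> [a|[a h]]; rewrite psi_s /psis /= rmorphM phi_s.
      by rewrite phiP /phis mulrDr (Lrs (inl a)) lvQS addr0.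
    by rewrite phiN -QV_Y /phis mulrDr QVls add0r QVQS QS_Y.
exists phi; split; first by exists psi; [exact: psiphi | exact: phipsi].
have psiMp k : psi (Mp le k) = Mp psie k.
  by rewrite rmorph_prod; apply: eq_bigr => e _; apply: psi_e.
have psiSp k : psi (Sp ls k) = Sp psis k.
  by rewrite rmorph_prod; apply: eq_bigr => e _; apply: psi_s.
have phiMp k : phi (Mp ce k) = Mp phie k.
  by rewrite rmorph_prod; apply: eq_bigr => e _; apply: phi_e.
have phiSp k : phi (Sp cs k) = Sp phis k.
  by rewrite rmorph_prod; apply: eq_bigr => e _; apply: phi_s.
case=> [s0|] y; last first.
  rewrite /=; by split; [move=> ->; exists 0; rewrite rmorph0 | move=> [x [-> <-]]; rewrite rmorph0].
split.
  move=> [t [Ht ->]]; exists (psi (\sum_(k <- t) iL k.1.1 *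
      (path_elt lv le k.1.2.1 k.1.2.2 * path_star lv ls k.2.1 k.2.2))); split; last first.
    exact: phipsi.
  rewrite rmorph_sum; apply: comp_sum => k Hk; rewrite rmorphM psi_i; apply: compZ.
  have [ok1 [ok2 [He Hw]]] := Ht k Hk.
  rewrite (mono_eq Lvv Ler Lrs ok1 ok2 He) !rmorphM psiMp psiSp psi_v.
  apply: (psiB (w2 := k.2.1)) => //; rewrite -Hw (mono_w hwvX hweX) //.
move=> [x [[t [Ht ->]] <-]].
rewrite rmorph_sum; apply: comp_sum => k Hk; rewrite rmorphM phi_i; apply: compZ.
have [ok1 [ok2 [He Hw]]] := Ht k Hk.
rewrite (mono_eq Cvv Cer Crs ok1 ok2 He) !rmorphM phiMp phiSp phi_v.
apply: (phiA (v2 := k.2.1)) => //; rewrite -Hw (mono_w hwv hwe) //.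
Qed.
End Lside.

Unset Implicit Arguments.

Theorem proposition5p13
  (R : pzRingType) (E : graph) (X : gV E -> Prop)
  (HX : forall v, X v -> @Reg E v)
  (I : Type) (wv : gV E -> Ssg I) (we : gE E -> Ssg I)
  (Hw : canonical_weight wv we)
  (C : pzRingType) (iC : {rmorphism R -> C})
  (cv : gV E -> C) (ce cs : gE E -> C)
  (HC : is_Cohn_algebra X iC cv ce cs)
  (L : pzRingType) (iL : {rmorphism R -> L})
  (lv : gV (EXgraph X) -> L) (le ls : gE (EXgraph X) -> L)
  (HL : is_Leavitt_algebra iL lv le ls) :
  exists phi : {rmorphism C -> L},
    bijective phi /\
    forall (s : Ssg I) (y : L),
      component iL lv le ls (@EX_wv E X I wv) (@EX_we E X I we) s y <->
      exists x : C, component iC cv ce cs wv we s x /\ phi x = y.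
Proof.
pose idx (v : gV E) : I := proj1_sig (constructive_indefinite_description _ (cw_vert Hw v)).
have hwv : forall v, wv v = Some (idx v, 0, idx v).
  move=> v; rewrite /idx; case: constructive_indefinite_description => i /=; done.
have hwe : forall e, we e = Some (idx (src e), 1, idx (rng e)).
  move=> e; have [i [j Hij]] := cw_edge Hw e.
  have Hs := cw_src Hw e; have Hr := cw_rng Hw e.
  rewrite Hij hwv /= in Hs; rewrite Hij hwv /= in Hr.
  move: Hs Hr; case: excluded_middle_informative => // Ei _.
  case: excluded_middle_informative => // Ej _.
  by rewrite Hij Ei Ej.
case: HC => HCr [HCu HCq]; case: HL => HLr [HLu HLq].
case: HCr => CRv CRe CRs Cvv Cvv' Cse Cer Crs Css Cee Cee' CCK.
case: HLr => LRv LRe LRs Lvv Lvv' Lse Ler Lrs Lss Lee Lee' LCK.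
by apply: (main LRv LRe LRs Lvv Lvv' Lse Ler Lrs Lss Lee Lee' LCK hwv hwe
  CRv CRe CRs Cvv Cvv' Cse Cer Crs Css Cee Cee' CCK HX HCu HCq HLu HLq).
Qed.
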